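(* Let $W\in C^1(\mathbb{R})$ satisfy (W-i) there is $\eta>0$ with $W(s)\geq\eta s^2$ for $|s|\leq1$ and $W(s)\geq\eta$ for $|s|\geq1$; (W-ii) $W''(0)=1$; (W-iii) there are $M>0$, $\alpha\in[0,2)$ with $W(s)\leq M|s|^\alpha$ for $s\geq0$. Let $\mathbf{u}_n$ be a sequence in $X$ with $E(\mathbf{u}_n)\to0$. Then, up to a subsequence, $\|\mathbf{u}_n\|\to0$.
   Context: $X=H^2(\mathbb{R})\times L^2(\mathbb{R})$ with elements $\mathbf{u}=(u,v)$ and norm $\|\mathbf{u}\|^2=\int(v^2+u_{xx}^2+u^2)\,dx$; $E(\mathbf{u})=\frac12\int(v^2+u_{xx}^2)\,dx+\int W(u)\,dx$. *)

(* Defs.v *)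
From HB Require Import structures.
From mathcomp Require Import all_boot all_order all_algebra.
From mathcomp Require Import all_classical all_reals all_analysis.
Set Implicit Arguments. Unset Strict Implicit. Unset Printing Implicit Defensive.
Import Order.TTheory GRing.Theory Num.Theory.
Import numFieldNormedType.Exports.
Local Open Scope classical_set_scope.
Local Open Scope ring_scope.

Section Defs.
Variable R : realType.
Local Notation mu := (@lebesgue_measure R).

Definition L2 (f : R -> R) : Prop :=
  measurable_fun setT f /\ mu.-integrable setT (fun x => (f x ^+ 2)%:E).

(* g is the weak (a.e.) derivative of the function f, i.e. f is absolutely
   continuous with f(b) - f(a) = \int_a^b g. *)
Definition weak_deriv (f g : R -> R) : Prop :=
  (forall a b : R, mu.-integrable `[a, b] (fun x => (g x)%:E)) /\
  (forall a b : R, a <= b -> f b - f a = \int[mu]_(x in `[a, b]) g x).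

(* u in H^2(R), with (representatives of) weak first derivative du and
   weak second derivative ddu. *)
Definition H2 (u du ddu : R -> R) : Prop :=
  [/\ L2 u, L2 du, L2 ddu, weak_deriv u du & weak_deriv du ddu].

Definition inX (u du ddu v : R -> R) : Prop := H2 u du ddu /\ L2 v.

Definition Xnorm (u ddu v : R -> R) : R :=
  Num.sqrt (fine (\int[mu]_x ((v x ^+ 2 + ddu x ^+ 2 + u x ^+ 2)%:E))).

Definition Energy (W : R -> R) (u ddu v : R -> R) : \bar R :=
  ((2^-1)%:E * \int[mu]_x ((v x ^+ 2 + ddu x ^+ 2)%:E)
   + \int[mu]_x ((W (u x))%:E))%E.

End Defs.

(* Main.v *)
Require Import Defs.
From HB Require Import structures.
From mathcomp Require Import all_boot all_order all_algebra.
From mathcomp Require Import all_classical all_reals all_analysis.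
From mathcomp Require Import ring lra measurable_realfun.
Import Order.TTheory GRing.Theory Num.Theory.
Import numFieldNormedType.Exports.
Local Open Scope classical_set_scope.
Local Open Scope ring_scope.

Section H.
Variable R : realType.
Local Notation mu := (@lebesgue_measure R).

Lemma mu_cc (a b : R) : a <= b -> mu `[a, b] = (b - a)%:E.
Proof.
move=> ab; rewrite lebesgue_measure_itv /= lte_fin.
case: ltgtP ab => // -> _.
by rewrite subrr.
Qed.

Lemma cst_int (a b k : R) : mu.-integrable `[a, b] (EFin \o cst k).
Proof.
apply/integrableP; split; first exact/measurable_EFinP/measurable_cst.
rewrite (_ : (fun x => `|(EFin \o cst k) x|)%E = cst `|k|%:E); last by apply/funext.
rewrite integral_cst //= lebesgue_measure_itv /=.
by case: ifP => _; rewrite ?mule0 // -EFinD -EFinM ltry.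
Qed.

Lemma itv_bound (G : R -> R) (a b lo hi : R) : a <= b ->
  mu.-integrable `[a, b] (EFin \o G) ->
  (forall t, a <= t <= b -> lo <= G t <= hi) ->
  lo * (b - a) <= \int[mu]_(x in `[a, b]) G x <= hi * (b - a).
Proof.
move=> ab iG hG; have E : b - a = fine (mu `[a, b]) by rewrite mu_cc.
rewrite E; apply/andP; split.
- rewrite -Rintegral_cst //.
  apply: le_Rintegral => //; first exact: cst_int.
  by move=> x /=; rewrite in_itv /= => /hG /andP[].
- rewrite -Rintegral_cst //.
  apply: le_Rintegral => //; first exact: cst_int.
  by move=> x /=; rewrite in_itv /= => /hG /andP[].
Qed.

Lemma fine_bound (x : \bar R) (S : R) : (0 <= x)%E -> (x <= S%:E)%E -> fine x <= S.
Proof. by case: x => //= r; rewrite !lee_fin. Qed.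

Lemma lemA (G : R -> R) (a b S : R) : a <= b -> b <= a + 1 ->
  mu.-integrable `[a, b] (EFin \o G) ->
  mu.-integrable setT (fun x => (G x ^+ 2)%:E) ->
  (\int[mu]_x ((G x ^+ 2)%:E) <= S%:E)%E ->
  `|\int[mu]_(x in `[a, b]) G x| <= 4^-1 + S.
Proof.
move=> ab ba iG iG2 HS.
have iG2' : mu.-integrable `[a, b] (EFin \o (fun x => G x ^+ 2)).
  by apply: integrableS iG2.
have iC := @cst_int a b 4^-1.
apply: (le_trans (le_normr_Rintegral _ iG)) => //.
apply: (@le_trans _ _ (\int[mu]_(x in `[a, b]) (4^-1 + G x ^+ 2))).
  apply: le_Rintegral => //; first exact: integrable_norm.
    exact: (integrableD _ iC iG2').
  move=> x _ /=; have := sqr_ge0 (`|G x| - 2^-1).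
  rewrite -[G x ^+ 2]real_normK ?num_real //; nra.
rewrite RintegralD //; apply: lerD.
  rewrite Rintegral_cst //; set m := fine _.
  have -> : m = b - a by rewrite /m; exact: (congr1 fine (mu_cc _ _ ab)).
  nra.
rewrite /Rintegral; apply: fine_bound; first by apply: integral_ge0 => x _; rewrite lee_fin sqr_ge0.
apply: le_trans HS; apply: ge0_subset_integral => //.
- exact: (measurable_int _ iG2).
- by move=> x _; rewrite lee_fin sqr_ge0.
Qed.

Lemma lemB (F G : R -> R) (x0 y K : R) : weak_deriv F G ->
  (forall t, `|t - x0| <= 1 -> `|G t - G x0| <= K) -> `|y - x0| <= 1 ->
  `|F y - F x0 - G x0 * (y - x0)| <= K.
Proof.
move=> [iG hG] hK hy.
have hb : forall t, `|t - x0| <= 1 -> G x0 - K <= G t <= G x0 + K.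
  move=> t /hK; rewrite ler_norml => /andP[h1 h2]; apply/andP; split; lra.
move: hy; rewrite ler_norml => /andP[hy1 hy2].
have K0 : 0 <= K by apply: le_trans (hK x0 _); rewrite ?subrr ?normr0.
case: (lerP x0 y) => xy.
- rewrite (hG _ _ xy).
  have := @itv_bound G x0 y (G x0 - K) (G x0 + K) xy (iG _ _).
  case/(_ _)/andP.
    move=> t /andP[t1 t2]; apply: hb; rewrite ler_norml; apply/andP; split; lra.
  move=> h1 h2; rewrite ler_norml; apply/andP; split; nra.
- have yx := ltW xy.
  have E : F y - F x0 = - (F x0 - F y) by rewrite opprB.
  rewrite E (hG _ _ yx).
  have := @itv_bound G y x0 (G x0 - K) (G x0 + K) yx (iG _ _).
  case/(_ _)/andP.
    move=> t /andP[t1 t2]; apply: hb; rewrite ler_norml; apply/andP; split; lra.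
  move=> h1 h2; rewrite ler_norml; apply/andP; split; nra.
Qed.

Lemma lemC (u du ddu : R -> R) (x0 y S : R) : weak_deriv u du -> weak_deriv du ddu ->
  mu.-integrable setT (fun x => (ddu x ^+ 2)%:E) ->
  (\int[mu]_x ((ddu x ^+ 2)%:E) <= S%:E)%E -> `|y - x0| <= 1 ->
  `|u y - u x0 - du x0 * (y - x0)| <= 4^-1 + S.
Proof.
move=> hu [iG hG] i2 hS hy; apply: lemB => // t.
rewrite ler_norml => /andP[t1 t2].
case: (lerP x0 t) => xt.
- rewrite (hG _ _ xt); apply: lemA => //; lra.
- rewrite -normrN opprB (hG _ _ (ltW xt)); apply: lemA => //; [lra|lra].
Qed.

Lemma aux_sign (c e w : R) : 2 < `|c| -> 0 <= c * e -> `|w - c - e| <= 4^-1 + 4^-1 ->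
  1 <= `|w|.
Proof.
move=> hc hce; rewrite ler_norml => /andP[h1 h2].
case: (lerP 0 c) => c0.
- rewrite ger0_norm // in hc.
  have e0 : 0 <= e by nra.
  rewrite ger0_norm; lra.
- rewrite ltr0_norm // in hc.
  have e0 : e <= 0 by nra.
  rewrite ltr0_norm; lra.
Qed.

Lemma lemD (W : R -> R) (eta : R) (u du ddu : R -> R) :
  0 < eta -> (forall s, 0 <= W s) -> (forall s, 1 <= `|s| -> eta <= W s) ->
  measurable_fun setT (EFin \o (fun x => W (u x))) ->
  weak_deriv u du -> weak_deriv du ddu ->
  mu.-integrable setT (fun x => (ddu x ^+ 2)%:E) ->
  (\int[mu]_x ((ddu x ^+ 2)%:E) <= (4^-1)%:E)%E ->
  (\int[mu]_x ((W (u x))%:E) < eta%:E)%E ->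
  forall x0, `|u x0| <= 2.
Proof.
move=> eta0 W0 W1 mW hu hdu i2 hS hW x0.
rewrite leNgt; apply/negP => hx.
have key : forall a, a <= x0 <= a + 1 -> a + 1 - a = 1 ->
   (forall y, a <= y <= a + 1 -> 1 <= `|u y|) -> False.
  move=> a ha E hy.
  have : (eta%:E <= \int[mu]_x ((W (u x))%:E))%E.
    apply: (@le_trans _ _ (\int[mu]_(x in `[a, (a + 1)%R]) ((W (u x))%:E))%E).
      apply: (@le_trans _ _ (\int[mu]_(x in `[a, (a + 1)%R]) (cst eta%:E x))%E).
        have a1 : a <= a + 1 by lra.
        rewrite integral_cst //; set m := (X in (_ * X)%E).
        have -> : m = (a + 1 - a)%:E by exact: (mu_cc _ _ a1).
        rewrite E.
        by rewrite mule1.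
      apply: ge0_le_integral => //.
      - by move=> x _; rewrite lee_fin ltW.
      - exact: (measurable_funS _ _ mW).
      - by move=> x; rewrite /= in_itv /= => /hy /W1; rewrite lee_fin.
    apply: ge0_subset_integral => //.
    by move=> x _; rewrite lee_fin.
  by rewrite leNgt hW.
have hT := fun y => @lemC u du ddu x0 y (4^-1) hu hdu i2 hS.
case: (lerP 0 (u x0 * du x0)) => hs.
- apply: (key x0); first by apply/andP; split; lra.
    lra.
  move=> y /andP[y1 y2]; apply: (@aux_sign (u x0) (du x0 * (y - x0))).
  + exact: hx.
  + rewrite mulrA; apply: mulr_ge0 => //; lra.
  + apply: hT; rewrite ler_norml; apply/andP; split; lra.
- apply: (key (x0 - 1)).
    by apply/andP; split; lra.
    lra.
  move=> y /andP[y1 y2]; apply: (@aux_sign (u x0) (du x0 * (y - x0))).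
  + exact: hx.
  + rewrite mulrA; apply: mulr_le0 => //; [exact: ltW | lra].
  + apply: hT; rewrite ler_norml; apply/andP; split; lra.
Qed.

Lemma split_en (A B : \bar R) (e : R) : (0 <= A)%E -> (0 <= B)%E ->
  ((2^-1)%:E * A + B)%E = e%:E ->
  exists a b, [/\ A = a%:E, B = b%:E, 0 <= a, 0 <= b & a / 2 + b = e].
Proof.
case: A => [a| |]; case: B => [b| |] //=; rewrite ?lee_fin.
- move=> a0 b0 [<-]; exists a, b; split => //; by rewrite mulrC.
all: by move=> _ _; rewrite mulry gtr0_sg ?invr_gt0 // mul1e.
Qed.

Lemma fin_bounds (x : \bar R) (r : R) : (0 <= x)%E -> (x <= r%:E)%E ->
  exists w, x = w%:E /\ 0 <= w /\ w <= r.
Proof. by case: x => //= w; rewrite !lee_fin => h1 h2; exists w. Qed.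

Lemma lemF (W : R -> R) (eta e : R) (u du ddu v : R -> R) :
  0 < eta -> (forall s, 0 <= W s) -> (forall s, 1 <= `|s| -> eta <= W s) ->
  (forall s, `|s| <= 1 -> eta * s ^+ 2 <= W s) -> continuous W ->
  inX u du ddu v -> Energy W u ddu v = e%:E -> e <= 8^-1 -> e < eta ->
  Xnorm u ddu v <= Num.sqrt ((2 + 4 / eta) * e).
Proof.
move=> eta0 W0 W1 W2 cW [[[mu_ iu] [mdu idu] [mddu iddu] hu hdu] [mv iv]] hE e8 eeta.
rewrite /Energy in hE.
set A := (\int[mu]_x ((v x ^+ 2 + ddu x ^+ 2)%:E))%E in hE.
set B := (\int[mu]_x ((W (u x))%:E))%E in hE.
have A0 : (0 <= A)%E by apply: integral_ge0 => x _; rewrite lee_fin addr_ge0 ?sqr_ge0.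
have B0 : (0 <= B)%E by apply: integral_ge0 => x _; rewrite lee_fin.
have mW : measurable_fun setT (EFin \o (fun x => W (u x))).
  apply/measurable_EFinP; exact: measurableT_comp (continuous_measurable_fun cW) mu_.
have [a [b [hA hB a0 b0 hab]]] := split_en _ _ _ A0 B0 hE.
have mA : measurable_fun setT (fun x => (v x ^+ 2 + ddu x ^+ 2)%:E).
  by apply/measurable_EFinP; apply: measurable_funD; apply: measurable_funX.
have hS : (\int[mu]_x ((ddu x ^+ 2)%:E) <= (4^-1)%:E)%E.
  apply: (@le_trans _ _ A).
    apply: ge0_le_integral => //.
    - by move=> x _; rewrite lee_fin sqr_ge0.
    - exact: (measurable_int _ iddu).
    - by move=> x _; rewrite lee_fin lerDr sqr_ge0.
  rewrite hA lee_fin; lra.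
have hBe : (B < eta%:E)%E by rewrite hB lte_fin; lra.
have bound := lemD _ _ _ _ _ eta0 W0 W1 mW hu hdu iddu hS hBe.
have e4 : 0 <= 4 / eta by rewrite divr_ge0 // ltW.
have hU : (\int[mu]_x ((u x ^+ 2)%:E) <= ((4 / eta) * b)%:E)%E.
  rewrite EFinM -hB -ge0_integralZl_EFin //; last by move=> x _; rewrite lee_fin.
  apply: ge0_le_integral => //.
  - by move=> x _; rewrite lee_fin sqr_ge0.
  - exact: (measurable_int _ iu).
  - exact: emeasurable_funM (measurable_cst _) mW.
  move=> x _; rewrite -EFinM lee_fin.
  rewrite -ler_pdivrMl; last by rewrite divr_gt0.
  rewrite invf_div.
  have s0 := normr_ge0 (u x); have s2 := bound x.
  rewrite -[u x ^+ 2]real_normK ?num_real //.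
  case: (lerP `|u x| 1) => s1.
    have := W2 (u x) s1; rewrite -[u x ^+ 2]real_normK ?num_real // => h.
    nra.
  have := W1 (u x) (ltW s1) => h.
  have hs : `|u x| ^+ 2 <= 4 by nra.
  have : eta / 4 * `|u x| ^+ 2 <= eta / 4 * 4.
    by rewrite ler_pM2l // divr_gt0.
  rewrite divfK; [lra | by rewrite pnatr_eq0].
have U0 : (0 <= \int[mu]_x ((u x ^+ 2)%:E))%E.
  by apply: integral_ge0 => x _; rewrite lee_fin sqr_ge0.
have [w [hw [w0 wb]]] := fin_bounds _ _ U0 hU.
have hT : (\int[mu]_x ((v x ^+ 2 + ddu x ^+ 2 + u x ^+ 2)%:E) =
    A + \int[mu]_x ((u x ^+ 2)%:E))%E.
  rewrite /A -ge0_integralD //.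
  - by move=> x _; rewrite lee_fin addr_ge0 ?sqr_ge0.
  - by move=> x _; rewrite lee_fin sqr_ge0.
  - exact: (measurable_int _ iu).
rewrite /Xnorm hT hA hw -EFinD /=.
apply: ler_wsqrtr.
move: e4 wb; set c := 4 / eta => c0 wb.
nra.
Qed.
End H.

Theorem lemma2 (R : realType) (W : R -> R)
  (* W in C^1(R) *)
  (HWd : forall x : R, derivable W x 1)
  (HWc : continuous (derive1 W))
  (* (W-i) *)
  (HWi : exists eta : R, 0 < eta /\
     (forall s : R, `|s| <= 1 -> eta * s ^+ 2 <= W s) /\
     (forall s : R, 1 <= `|s| -> eta <= W s))
  (* (W-ii) W''(0) = 1 *)
  (HWii : derivable (derive1 W) 0 1 /\ derive1 (derive1 W) 0 = 1)
  (* (W-iii) *)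
  (HWiii : exists (M alpha : R), 0 < M /\ 0 <= alpha < 2 /\
     (forall s : R, 0 <= s -> W s <= M * s `^ alpha))
  (u du ddu v : nat -> R -> R)
  (Hx : forall n, inX (u n) (du n) (ddu n) (v n))
  (HE : (Energy W (u n) (ddu n) (v n)) @[n --> \oo] --> 0%E) :
  exists phi : nat -> nat, {homo phi : m n / (m < n)%N >-> (m < n)%N} /\
    (Xnorm (u (phi n)) (ddu (phi n)) (v (phi n))) @[n --> \oo] --> 0.
Proof.
have [eta [eta0 [W2 W1]]] := HWi.
have W0 : forall s, 0 <= W s.
  move=> s; case: (lerP `|s| 1) => s1.
    by apply: le_trans (W2 s s1); rewrite mulr_ge0 ?sqr_ge0 // ltW.
  by apply: le_trans (W1 s (ltW s1)); rewrite ltW.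
have cW : continuous W.
  by move=> x; apply: differentiable_continuous; apply/derivable1_diffP.
exists id; split; first by [].
apply/cvgrPdist_lt => eps eps0.
move/fine_cvgP: HE => [Hfin Hcv].
set K := 2 + 4 / eta.
have K0 : 0 < K by rewrite /K addr_gt0 // divr_gt0.
set d := Num.min (8^-1) (Num.min (eta / 2) ((eps / 2) ^+ 2 / K)).
have d0 : 0 < d.
  have h1 : 0 < (8^-1 : R) by rewrite invr_gt0.
  have h2 : 0 < eta / 2 by rewrite divr_gt0.
  have h3 : 0 < (eps / 2) ^+ 2 / K by rewrite divr_gt0 // exprn_gt0 // divr_gt0.
  by rewrite /d !lt_min h1 h2 h3.
move/cvgrPdist_lt: Hcv => /(_ d d0) Hd.
apply: filterS2 Hfin Hd => n fin hn.
set e := fine (Energy W (u n) (ddu n) (v n)) in hn.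
have hE : Energy W (u n) (ddu n) (v n) = e%:E by rewrite /e fineK.
move: hn; rewrite /= -/e sub0r normrN => hn.
have he : e < d by apply: le_lt_trans hn; exact: ler_norm.
move: he; rewrite !lt_min => /and3P[he1 he2 he3].
have he2' : e < eta by apply: (lt_trans he2); rewrite ltr_pdivrMr //; lra.
have hX := lemF _ _ _ _ _ _ _ _ eta0 W0 W1 W2 cW (Hx n) hE (ltW he1) he2'.
have X0 : 0 <= Xnorm (u n) (ddu n) (v n) by rewrite /Xnorm sqrtr_ge0.
rewrite sub0r normrN ger0_norm //.
apply: (le_lt_trans hX).
have hKe : K * e <= (eps / 2) ^+ 2.
  by move: he3; rewrite ltr_pdivlMr // mulrC => /ltW.
apply: (le_lt_trans (ler_wsqrtr hKe)).
rewrite sqrtr_sqr ger0_norm ?divr_ge0 ?ltW //; lra.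
Qed.
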